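(* Fix reals $a<b$, $S=T\cap[a,b]$, a natural number $m\ge1$, an integer $\ell\ge1$ and reals $a=u_1<u_2<\cdots<u_\ell<u_{\ell+1}=b$. Let $\mathcal A$ be any set of constraints on real tuples $(c,(x_i^{(k)})_{1\le i\le \ell,\,0\le k\le 2m-1})$ such that for every $S$-code $C$ the tuple $(|C|,(x_i^{(k)}(C)))$ satisfies $\mathcal A$. Let $c^*(m)$ be the supremum of $c$ over all real $c,z,(x_i^{(k)})$ satisfying: (5) $\begin{pmatrix}1&c\\ c&z\end{pmatrix}\succeq0$ and $z=c+x_1^{(0)}+\cdots+x_\ell^{(0)}$; (6) $c+\sum_{d=0}^k p_{kd}\sum_{i=1}^\ell x_i^{(d)}\ge0$ for $k=1,\ldots,2m-1$; (7) $H_m(x_i^{(0)},x_i^{(1)},\ldots,x_i^{(2m-1)},[u_i,u_{i+1}])\succeq0$ for $i=1,\ldots,\ell$; (8) the constraints $\mathcal A$. Then $A(\mathbf M,S)\le c^*(m)$.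
   Context: $\mathbf M$ is a 2-point-homogeneous space with its associated real function $\tau(x,y)$, $\tau_0:=\tau(x,x)$, and $T=\{\tau(x,y):x,y\in\mathbf M\}$. Its zonal spherical functions $\Phi_k$ are assumed to be real polynomials of degree $k$, $\Phi_k(t)=\sum_{d=0}^k p_{kd}t^d$, with $\Phi_k(\tau_0)=1$, such that for every $k\ge0$ and every finite $\{x_1,\ldots,x_N\}\subset\mathbf M$ the matrix $(\Phi_k(\tau(x_i,x_j)))_{i,j}$ is positive semidefinite. An $S$-code is a finite $C\subset\mathbf M$ with $\tau(x,y)\in S$ for all distinct $x,y\in C$; $A(\mathbf M,S)$ is the largest cardinality of an $S$-code. For an $S$-code $C=\{z_1,\ldots,z_c\}$, $x_i^{(k)}(C):=\sum \tau(z_p,z_q)^k$, the sum over ordered pairs $(p,q)$ with $p\ne q$ and $\tau(z_p,z_q)\in[u_i,u_{i+1})$ for $i<\ell$, resp. $\tau(z_p,z_q)\in[u_\ell,b]$ for $i=\ell$ (with $\tau^0:=1$). For reals $s_0,\ldots,s_{2m-1}$ and $\alpha<\beta$: $R_m=(s_{i+j-2})_{i,j=1}^m$, $F_m^+(\alpha)=(s_{i+j-1}-\alpha s_{i+j-2})$, $F_m^-(\beta)=(\beta s_{i+j-2}-s_{i+j-1})$, $H_m(s_0,\ldots,s_{2m-1},[\alpha,\beta])=\operatorname{diag}(R_m,F_m^+(\alpha),F_m^-(\beta))$. *)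

(* Defs.v *)
From HB Require Import structures.
From mathcomp Require Import all_boot all_order all_algebra.
From mathcomp Require Import boolp classical_sets reals constructive_ereal ereal.
Set Implicit Arguments. Unset Strict Implicit. Unset Printing Implicit Defensive.
Import Order.TTheory GRing.Theory Num.Theory.
Local Open Scope ring_scope.
Local Open Scope classical_set_scope.

Section Defs.
Variable R : realType.

Definition psd (n : nat) (A : 'M[R]_n) : Prop :=
  A^T = A /\ forall v : 'cV[R]_n, 0 <= (v^T *m A *m v) 0 0.

Definition two_point_homogeneous (M : Type) (tau : M -> M -> R) : Prop :=
  exists G : set (M -> M),
    (forall g, G g -> bijective g /\ forall x y, tau (g x) (g y) = tau x y) /\
    (forall x y x' y', tau x y = tau x' y' ->
        exists g, G g /\ g x = x' /\ g y = y').

Variable M : Type.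
Variable tau : M -> M -> R.

Definition Sset (a b : R) : set R :=
  [set t | (exists x y, tau x y = t) /\ a <= t <= b].

Definition is_code (S : set R) (N : nat) (z : 'I_N -> M) : Prop :=
  injective z /\ forall p q : 'I_N, p != q -> S (tau (z p) (z q)).

(* bins (0-indexed): bin i is [u i, u (i+1)) for i+1 < l, and [u (l-1), u l] for i = l-1 *)
Definition in_bin (u : nat -> R) (l i : nat) (t : R) : bool :=
  if (i.+1 < l)%N then (u i <= t) && (t < u i.+1) else (u i <= t) && (t <= u l).

Definition code_x (u : nat -> R) (l m N : nat) (z : 'I_N -> M)
  : 'I_l -> 'I_(2 * m) -> R :=
  fun i k => \sum_(p < N) \sum_(q < N | (p != q) && in_bin u l i (tau (z p) (z q)))
               tau (z p) (z q) ^+ k.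

End Defs.

Definition ext (R : realType) (n : nat) (f : 'I_n -> R) (k : nat) : R :=
  match @insub nat (fun k => (k < n)%N) _ k with Some j => f j | None => 0 end.

(* H_m(s_0..s_{2m-1},[alpha,beta]) = diag(R_m, F_m^+(alpha), F_m^-(beta)) *)
Definition Hmat (R : realType) (m : nat) (s : nat -> R) (alpha beta : R)
  : 'M[R]_(m + m + m) :=
  block_mx
    (block_mx (\matrix_(i < m, j < m) s (i + j)%N) 0
              0 (\matrix_(i < m, j < m) (s (i + j).+1 - alpha * s (i + j)%N)))
    0 0 (\matrix_(i < m, j < m) (beta * s (i + j)%N - s (i + j).+1)).

Definition feasible (R : realType) (Phi : nat -> {poly R}) (m l : nat)
  (u : nat -> R) (A : R -> ('I_l -> 'I_(2 * m) -> R) -> Prop)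
  (c z : R) (x : 'I_l -> 'I_(2 * m) -> R) : Prop :=
  psd (\matrix_(i < 2, j < 2) (if i == j then (if i == 0 :> nat then 1 else z) else c))
  /\ z = c + \sum_(i < l) ext (x i) 0
  /\ (forall k : nat, (1 <= k <= 2 * m - 1)%N ->
        0 <= c + \sum_(d < k.+1) (Phi k)`_d * \sum_(i < l) ext (x i) d)
  /\ (forall i : 'I_l, psd (Hmat m (ext (x i)) (u i) (u i.+1)))
  /\ A c x.

Definition cstar (R : realType) (Phi : nat -> {poly R}) (m l : nat)
  (u : nat -> R) (A : R -> ('I_l -> 'I_(2 * m) -> R) -> Prop) : \bar R :=
  ereal_sup [set c%:E | c in [set c | exists z x, feasible Phi u A c z x]].

(* Main.v *)
Require Import Defs.
From HB Require Import structures.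
From mathcomp Require Import all_boot all_order all_algebra.
From mathcomp Require Import boolp classical_sets reals constructive_ereal ereal.
From mathcomp Require Import ring lra zify.
Set Implicit Arguments. Unset Strict Implicit. Unset Printing Implicit Defensive.
Import Order.TTheory GRing.Theory Num.Theory.
Local Open Scope ring_scope.

Lemma u_mono (R : realType) (u : nat -> R) l
  (hu : forall i : nat, (i < l)%N -> u i < u i.+1) i j :
  (i <= j)%N -> (j <= l)%N -> u i <= u j.
Proof.
elim: j => [|j IH]; first by rewrite leqn0 => /eqP ->.
rewrite leq_eqVlt => /orP [/eqP -> //|hij] hjl.
apply: le_trans (IH hij (ltnW hjl)) _; exact/ltW/hu.
Qed.

Lemma bin_bounds (R : realType) (u : nat -> R) l i t :
  (i < l)%N -> in_bin u l i t -> u i <= t <= u i.+1.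
Proof.
rewrite /in_bin => hil; case: ifP => h /andP [h1 h2]; rewrite h1 /=.
  exact: ltW.
by have -> : i.+1 = l by lia.
Qed.

Lemma bin_uniq (R : realType) (u : nat -> R) l
  (hu : forall i : nat, (i < l)%N -> u i < u i.+1) i j t :
  (i < l)%N -> (j < l)%N -> in_bin u l i t -> in_bin u l j t -> i = j.
Proof.
wlog hij : i j / (i <= j)%N.
  move=> W hi hj bi bj; case: (leqP i j) => h; first exact: W.
  by apply/esym/W => //; exact: ltnW.
move=> hi hj bi bj; apply/eqP; rewrite eqn_leq hij /=; case: (leqP j i) => // hlt.
move: bi; rewrite /in_bin (_ : (i.+1 < l)%N = true); last by lia.
move=> /andP [_ hti].
have := bin_bounds hj bj => /andP [hjt _].
have := u_mono hu hlt (ltnW hj); lra.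
Qed.

Lemma bin_exists (R : realType) (u : nat -> R) l
  (hu : forall i : nat, (i < l)%N -> u i < u i.+1) t :
  (1 <= l)%N -> u 0%N <= t <= u l -> exists i : 'I_l, in_bin u l i t.
Proof.
move=> hl /andP [h0 hl'].
have claim : forall n, (1 <= n)%N -> (n <= l)%N -> t < u n ->
    exists2 i, (i < n)%N & u i <= t < u i.+1.
  elim=> [//|n IH] _ hn ht.
  case: (ltnP 0 n) => hn0.
    case: (ltP t (u n)) => htn.
      by have [i hi hb] := IH hn0 (ltnW hn) htn; exists i => //; exact: ltnW.
    by exists n => //; rewrite htn ht.
  have e : n = 0%N by lia.
  by exists 0%N => //; rewrite h0; rewrite e in ht.
case: (ltP t (u l.-1)) => ht.
  have hl1 : (1 <= l.-1)%N.
    case: (ltnP 0 l.-1) => // h; move: ht; rewrite (_ : l.-1 = 0%N); [lra|lia].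
  have [i hi /andP [b1 b2]] := claim l.-1 hl1 (leq_pred l) ht.
  have il : (i < l)%N by lia.
  exists (Ordinal il); rewrite /in_bin /= (_ : (i.+1 < l)%N = true) ?b1 ?b2 //; lia.
have il : (l.-1 < l)%N by lia.
exists (Ordinal il); rewrite /in_bin /= (_ : (l.-1.+1 < l)%N = false) ?ht ?hl' //; lia.
Qed.

Lemma bin_sum (R : realType) (u : nat -> R) l
  (hu : forall i : nat, (i < l)%N -> u i < u i.+1) (g t : R) :
  (1 <= l)%N -> u 0%N <= t <= u l ->
  \sum_(i < l) (if in_bin u l i t then g else 0) = g.
Proof.
move=> hl ht; have [i0 hi0] := bin_exists hu hl ht.
rewrite (bigD1 i0) //= hi0 big1 ?addr0 // => j hj.
case: ifP => // hb; move: hj; suff -> : j = i0 by rewrite eqxx.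
by apply: val_inj; exact: (bin_uniq hu (ltn_ord j) (ltn_ord i0) hb hi0).
Qed.

Lemma extE (R : realType) n (f : 'I_n -> R) k (h : (k < n)%N) :
  ext f k = f (Ordinal h).
Proof. by rewrite /ext insubT /=; congr f; apply: val_inj. Qed.

Lemma diag_split (R : realType) N (G : 'I_N -> 'I_N -> R) :
  (forall p, G p p = 1) ->
  N%:R + \sum_p \sum_(q | p != q) G p q = \sum_p \sum_q G p q.
Proof.
move=> h.
have -> : \sum_p \sum_q G p q = \sum_p (1 + \sum_(q | p != q) G p q).
  apply: eq_bigr => p _; rewrite (bigD1 p) //= h; congr (_ + _).
  by apply: eq_bigl => q; rewrite eq_sym.
by rewrite big_split /= sumr_const card_ord.
Qed.

Lemma swap4 (R : realType) (D I J K : finType) (P : I -> J -> K -> bool)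
  (F : D -> I -> J -> K -> R) :
  \sum_(d : D) \sum_(i : I) \sum_(j : J) \sum_(k | P i j k) F d i j k =
  \sum_i \sum_j \sum_(k | P i j k) \sum_d F d i j k.
Proof.
rewrite exchange_big; apply: eq_bigr => i _.
rewrite exchange_big; apply: eq_bigr => j _.
by rewrite exchange_big.
Qed.
Lemma quadE (R : realType) n (A : 'M[R]_n) (v : 'cV[R]_n) :
  (v^T *m A *m v) 0 0 = \sum_i \sum_j v i 0 * A i j * v j 0.
Proof.
rewrite mxE; under eq_bigr => j _ do rewrite mxE big_distrl /=.
rewrite exchange_big; apply: eq_bigr => i _; apply: eq_bigr => j _.
by rewrite mxE.
Qed.

Lemma psd_block (R : realType) n1 n2 (A : 'M[R]_n1) (B : 'M[R]_n2) :
  psd A -> psd B -> psd (block_mx A 0 0 B).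
Proof.
move=> [tA qA] [tB qB]; split.
  by rewrite tr_block_mx tA tB !trmx0.
move=> v; rewrite -(vsubmxK v) tr_col_mx mul_row_block !mulmx0 addr0 add0r.
rewrite mul_row_col mxE; apply: addr_ge0; [exact: qA | exact: qB].
Qed.

Lemma psd_hankel (R : realType) (n N : nat) (P : 'I_N -> 'I_N -> bool)
  (c t : 'I_N -> 'I_N -> R) (Mx : 'M[R]_n) :
  (forall p q, P p q -> 0 <= c p q) ->
  (forall i j : 'I_n, Mx i j = \sum_p \sum_(q | P p q) c p q * t p q ^+ (i + j)) ->
  psd Mx.
Proof.
move=> hc hM; split.
  by apply/matrixP => i j; rewrite mxE !hM addnC.
move=> v; rewrite quadE.
have -> : \sum_i \sum_j v i 0 * Mx i j * v j 0 =
   \sum_p \sum_(q | P p q) c p q * (\sum_i v i 0 * t p q ^+ i) ^+ 2.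
  transitivity (\sum_i \sum_j \sum_p \sum_(q | P p q)
                   c p q * ((v i 0 * t p q ^+ i) * (v j 0 * t p q ^+ j))).
    apply: eq_bigr => i _; apply: eq_bigr => j _.
    rewrite hM big_distrr big_distrl /=; apply: eq_bigr => p _.
    rewrite big_distrr big_distrl /=; apply: eq_bigr => q _.
    by rewrite exprD; ring.
  rewrite exchange_big /=; under eq_bigr => j _ do rewrite exchange_big /=.
  rewrite exchange_big /=; apply: eq_bigr => p _.
  under eq_bigr => j _ do rewrite exchange_big /=.
  rewrite exchange_big /=; apply: eq_bigr => q _.
  rewrite expr2 big_distrl /= big_distrr /= exchange_big /=.
  apply: eq_bigr => i _; rewrite big_distrr big_distrr /=.
  by apply: eq_bigr => j _; ring.
apply: sumr_ge0 => p _; apply: sumr_ge0 => q Pq.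
by apply: mulr_ge0; [exact: hc | exact: sqr_ge0].
Qed.

Lemma code_sum (R : realType) (M : Type) (tau : M -> M -> R) (u : nat -> R) l
  (hu : forall i : nat, (i < l)%N -> u i < u i.+1) (hl : (1 <= l)%N)
  N (z : 'I_N -> M) (F : R -> R) :
  (forall p q : 'I_N, p != q -> u 0%N <= tau (z p) (z q) <= u l) ->
  \sum_(i < l) \sum_p \sum_(q | (p != q) && in_bin u l i (tau (z p) (z q)))
     F (tau (z p) (z q)) =
  \sum_p \sum_(q | p != q) F (tau (z p) (z q)).
Proof.
move=> hT.
under eq_bigr => i _ do under eq_bigr => p _ do rewrite big_mkcondr /=.
rewrite exchange_big; apply: eq_bigr => p _.
rewrite exchange_big; apply: eq_bigr => q pq.
exact: bin_sum hu _ _ hl (hT _ _ pq).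
Qed.

Unset Implicit Arguments.

Theorem theorem6p1 (R : realType) (M : Type) (tau : M -> M -> R) (tau0 : R)
  (Phi : nat -> {poly R})
  (Htph : two_point_homogeneous tau)
  (Htau0 : forall x, tau x x = tau0)
  (Hdeg : forall k, size (Phi k) = k.+1)
  (Hnorm : forall k, (Phi k).[tau0] = 1)
  (Hpsd : forall (k N : nat) (z : 'I_N -> M), injective z ->
            psd (\matrix_(i < N, j < N) (Phi k).[tau (z i) (z j)]))
  (a b : R) (hab : a < b) (m : nat) (hm : (1 <= m)%N) (l : nat) (hl : (1 <= l)%N)
  (u : nat -> R) (hu0 : u 0%N = a) (hul : u l = b)
  (hu : forall i : nat, (i < l)%N -> u i < u i.+1)
  (A : R -> ('I_l -> 'I_(2 * m) -> R) -> Prop)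
  (HA : forall (N : nat) (z : 'I_N -> M), is_code tau (Sset tau a b) z ->
          A N%:R (@code_x R M tau u l m N z)) :
  forall (N : nat) (z : 'I_N -> M), is_code tau (Sset tau a b) z ->
    ((N%:R : R)%:E <= cstar Phi u A)%E.
Proof.
move=> N z Hz.
have [zinj zS] := Hz.
have hT : forall p q : 'I_N, p != q -> u 0%N <= tau (z p) (z q) <= u l.
  move=> p q pq; have [_ /andP[h1 h2]] := zS p q pq; by rewrite hu0 hul h1 h2.
set x := @code_x R M tau u l m N z.
have m2 : (0 < 2 * m)%N by lia.
have hz : N%:R + \sum_(i < l) ext (x i) 0 = (N%:R : R) ^+ 2.
  have -> : \sum_(i<l) ext (x i) 0 = \sum_(p : 'I_N) \sum_(q : 'I_N | p != q) (1 : R).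
    rewrite -(code_sum hu hl (fun _ => 1) hT).
    apply: eq_bigr => i _; rewrite (extE _ m2) /x /code_x /=.
    by apply: eq_bigr => p _; apply: eq_bigr => q _; rewrite expr0.
  rewrite (@diag_split R N (fun _ _ => 1)) //.
  under eq_bigr do rewrite sumr_const card_ord.
  rewrite sumr_const card_ord expr2 -mulr_natr.
  ring.
have Hf : feasible Phi u A N%:R (N%:R + \sum_i ext (x i) 0) x.
  split.
    rewrite hz; split.
      by apply/matrixP => i j; rewrite !mxE eq_sym; case: eqP => [->|].
    move=> v; rewrite quadE !big_ord_recl !big_ord0 !mxE /=.
    set v0 := v ord0 0; set v1 := v (lift ord0 ord0) 0.
    have -> : v0 * 1 * v0 + (v0 * N%:R * v1 + 0) +
      (v1 * N%:R * v0 + (v1 * N%:R ^+ 2 * v1 + 0) + 0) = (v0 + N%:R * v1) ^+ 2 by ring.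
    exact: sqr_ge0.
  split; first by [].
  split.
    move=> k /andP [k1 k2].
    have E : \sum_(d < k.+1) (Phi k)`_d * \sum_(i < l) ext (x i) d =
             \sum_(p : 'I_N) \sum_(q : 'I_N | p != q) (Phi k).[tau (z p) (z q)].
      rewrite -(code_sum hu hl (fun t => (Phi k).[t]) hT).
      transitivity (\sum_(d < k.+1) \sum_(i<l) \sum_p
         \sum_(q | (p != q) && in_bin u l i (tau (z p) (z q)))
            (Phi k)`_d * tau (z p) (z q) ^+ d).
        apply: eq_bigr => d _.
        have hd : (d < 2 * m)%N by (have := ltn_ord d; lia).
        rewrite big_distrr; apply: eq_bigr => i _; rewrite (extE _ hd) /x /code_x /=.
        rewrite big_distrr; apply: eq_bigr => p _.
        by rewrite big_distrr.
      rewrite swap4; apply: eq_bigr => i _; apply: eq_bigr => p _.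
      apply: eq_bigr => q _.
      by rewrite (horner_coef_wide _ (eq_leq (Hdeg k))).
    rewrite E diag_split; last by move=> p; rewrite Htau0 Hnorm.
    have [_ hq] := Hpsd k N z zinj.
    apply: le_trans (hq (const_mx 1)) _; rewrite quadE le_eqVlt; apply/orP; left.
    apply/eqP; apply: eq_bigr => p _; apply: eq_bigr => q _.
    by rewrite !mxE mulr1 mul1r.
  split; last exact: HA.
  move=> i0; rewrite /Hmat.
  have hP : forall p q, (p != q) && in_bin u l i0 (tau (z p) (z q)) ->
      u i0 <= tau (z p) (z q) <= u i0.+1.
    by move=> p q /andP [_ hb]; exact: bin_bounds (ltn_ord i0) hb.
  apply: psd_block; first apply: psd_block.
  - apply: (psd_hankel (P := fun p q => (p != q) && in_bin u l i0 (tau (z p) (z q)))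
        (t := fun p q => tau (z p) (z q)) (c := fun _ _ => 1)) => // i j.
    have h : (i + j < 2 * m)%N by (have := ltn_ord i; have := ltn_ord j; lia).
    rewrite mxE (extE _ h) /x /code_x /=.
    by apply: eq_bigr => p _; apply: eq_bigr => q _; rewrite mul1r.
  - apply: (psd_hankel (P := fun p q => (p != q) && in_bin u l i0 (tau (z p) (z q)))
        (t := fun p q => tau (z p) (z q)) (c := fun p q => tau (z p) (z q) - u i0)).
      by move=> p q /hP /andP [h1 _]; rewrite subr_ge0.
    move=> i j.
    have h1 : ((i + j).+1 < 2 * m)%N by (have := ltn_ord i; have := ltn_ord j; lia).
    have h2 : (i + j < 2 * m)%N by lia.
    rewrite mxE (extE _ h1) (extE _ h2) /x /code_x /= big_distrr -sumrB.
    apply: eq_bigr => p _; rewrite big_distrr -sumrB; apply: eq_bigr => q _.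
    by rewrite exprS /=; ring.
  - apply: (psd_hankel (P := fun p q => (p != q) && in_bin u l i0 (tau (z p) (z q)))
        (t := fun p q => tau (z p) (z q)) (c := fun p q => u i0.+1 - tau (z p) (z q))).
      by move=> p q /hP /andP [_ h2]; rewrite subr_ge0.
    move=> i j.
    have h1 : ((i + j).+1 < 2 * m)%N by (have := ltn_ord i; have := ltn_ord j; lia).
    have h2 : (i + j < 2 * m)%N by lia.
    rewrite mxE (extE _ h1) (extE _ h2) /x /code_x /= big_distrr -sumrB.
    apply: eq_bigr => p _; rewrite big_distrr -sumrB; apply: eq_bigr => q _.
    by rewrite exprS /=; ring.
apply: ereal_sup_ubound; exists N%:R => //.
by exists (N%:R + \sum_i ext (x i) 0), x.
Qed.
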